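(* For every $c^+>1$ there exists $N\in\mathbb{N}$ with $b_n\le c^+\sqrt n/\sqrt3$ for all $n\ge N$. Given any such pair $(c^+,N)$, set $$C_\alpha=\frac{3^{1/4}}{\sqrt{c^+}},\qquad \theta=\frac{(c^+)^2}{3}\Big(\big(1+\tfrac1N\big)\big(1+\tfrac2N\big)\Big)^{1/4}.$$ Then for all $n\ge N$, $$\alpha_n\ge C_\alpha n^{3/4}\qquad\text{and}\qquad \frac{\beta_n}{\alpha_n}\le\theta.$$ For $\kappa=4$ one may take $c^+=1.025$ and $N=2187$, giving $C_\alpha\approx1.299925254$ and $\theta\approx0.350328462$.
   Context: Let $\kappa\in\mathbb{R}$, $V(x)=x^4/4-\kappa x^2/2$, and $\nu(dx)=e^{-V}dx/\int e^{-V}$. Let $p_n$ be its orthonormal polynomials, with recurrence $xp_n=a_{n+1}p_{n+1}+a_np_{n-1}$, $a_0=0$, and $a_n>0$ for $n\ge1$. Set $b_n=a_n^2$ (the unique positive solution of $n/b_n=b_{n-1}+b_n+b_{n+1}-\kappa$ with $b_0=0$). For $n\ge1$ define $\alpha_n=n/a_n$ and $\beta_n=a_na_{n+1}a_{n+2}$. *)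

(* Defs.v *)
From Stdlib Require Import Reals Lra.
Open Scope R_scope.

(* b n = a_n^2 : the recurrence coefficients of the quartic Freud weight,
   characterised (as in the paper) as the positive solution of the string
   (Freud) equation  n / b_n = b_{n-1} + b_n + b_{n+1} - kappa,  b_0 = 0. *)
Definition freud_solution (kappa : R) (b : nat -> R) : Prop :=
  b 0%nat = 0 /\
  (forall n : nat, (1 <= n)%nat -> 0 < b n) /\
  (forall n : nat, (1 <= n)%nat ->
     INR n / b n = b (n - 1)%nat + b n + b (S n) - kappa).

Definition a_coef (b : nat -> R) (n : nat) : R := sqrt (b n).

Definition alpha (b : nat -> R) (n : nat) : R := INR n / a_coef b n.

Definition beta (b : nat -> R) (n : nat) : R :=
  a_coef b n * a_coef b (S n) * a_coef b (S (S n)).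

Definition C_alpha (cp : R) : R := Rpower 3 (1/4) / sqrt cp.

Definition theta (cp : R) (N : nat) : R :=
  cp ^ 2 / 3 * Rpower ((1 + 1 / INR N) * (1 + 2 / INR N)) (1/4).

Definition upper_pair (b : nat -> R) (cp : R) (N : nat) : Prop :=
  forall n : nat, (N <= n)%nat -> b n <= cp * sqrt (INR n) / sqrt 3.

(* Main.v *)
Require Import Defs.
From Stdlib Require Import Reals Lra Lia Psatz.
Open Scope R_scope.

Lemma key_real (n b bm bp B Bm Bp k t : R) :
  0 < b -> 0 < B -> n = b*(bm+b+bp-k) -> n = 3*B^2 - k*B ->
  3*B*b <= 2*n -> 0 <= 2*B-Bm-Bp -> 2*B-Bm-Bp <= t ->
  Rabs (b-B) <= 2/5*(Rabs (bm-Bm) + Rabs (bp-Bp)) + t.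
Proof.
  intros hb hB h1 h2 h3 hs1 hs2.
  assert (id : (b-B)*(n+B*b) = b*B*((2*B-Bm-Bp) - (bm-Bm) - (bp-Bp))).
  { assert (E: (b-B)*(n+B*b) - b*B*((2*B-Bm-Bp) - (bm-Bm) - (bp-Bp))
      = -B*(n - b*(bm+b+bp-k)) + b*(n - (3*B^2-k*B))) by ring.
    rewrite <- h1 in E at 1. rewrite <- h2 in E at 1. lra. }
  assert (hpos : 0 < n + B*b) by nra.
  assert (habs : Rabs (b-B) * (n+B*b) = b*B*Rabs ((2*B-Bm-Bp) - (bm-Bm) - (bp-Bp))).
  { rewrite <- (Rabs_pos_eq (n+B*b)) by lra. rewrite <- Rabs_mult, id.
    rewrite Rabs_mult, Rabs_pos_eq by nra. reflexivity. }
  assert (htri : Rabs ((2*B-Bm-Bp) - (bm-Bm) - (bp-Bp)) <= t + (Rabs (bm-Bm) + Rabs (bp-Bp))).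
  { unfold Rminus at 1 2. eapply Rle_trans. apply Rabs_triang.
    eapply Rle_trans. apply Rplus_le_compat_r. apply Rabs_triang.
    rewrite !Rabs_Ropp. rewrite (Rabs_pos_eq (2*B-Bm-Bp)) by lra. lra. }
  assert (hbB : 0 < b*B) by nra.
  assert (h4 : Rabs (b-B) * (5/2*(b*B)) <= b*B*(t + (Rabs (bm-Bm) + Rabs (bp-Bp)))).
  { apply Rle_trans with (Rabs (b-B) * (n+B*b)).
    apply Rmult_le_compat_l. apply Rabs_pos. nra.
    rewrite habs. apply Rmult_le_compat_l; lra. }
  assert (h5 : Rabs (b-B) * (5/2) <= t + (Rabs (bm-Bm) + Rabs (bp-Bp))).
  { apply Rmult_le_reg_l with (b*B). exact hbB. nra. }
  assert (0 <= t) by lra. lra.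
Qed.

Lemma sigma_real (s sm sp : R) : 0 < s -> 0 <= sm -> 0 <= sp ->
  sm^2 = s^2 - 12 -> sp^2 = s^2 + 12 ->
  0 <= 2*s - sm - sp /\ (2*s - sm - sp) * s^3 <= 144.
Proof.
  intros hs hm hp e1 e2.
  assert (h1 : sm*sp <= s^2).
  { assert (E0: (sm*sp)^2 = (s^2)^2 - 144).
    { replace ((sm*sp)^2) with (sm^2*sp^2) by ring. rewrite e1, e2. ring. }
    assert (0 <= sm*sp) by nra. nra. }
  assert (h2 : sm + sp <= 2*s).
  { assert ((sm+sp)^2 <= (2*s)^2) by nra. nra. }
  assert (h3 : (s^2 - sm*sp) * s^2 <= 144).
  { assert (E: (s^2 - sm*sp)*(s^2+sm*sp) = 144).
    { replace ((s^2 - sm*sp)*(s^2+sm*sp)) with ((s^2)^2 - sm^2*sp^2) by ring. rewrite e1, e2. ring. }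
    assert (0 <= s^2 - sm*sp) by lra.
    assert (0 <= (s^2-sm*sp)*(sm*sp)) by (apply Rmult_le_pos; nra). nra. }
  split. lra.
  assert (E2 : (2*s - (sm+sp))*(2*s + (sm+sp)) = 2*(s^2 - sm*sp)).
  { replace ((2*s - (sm+sp))*(2*s + (sm+sp))) with (4*s^2 - (sm^2 + sp^2) - 2*sm*sp) by ring.
    rewrite e1, e2. ring. }
  assert (h4 : (2*s - (sm+sp)) * s <= s^2 - sm*sp) by nra.
  assert (h5 : (2*s - (sm+sp)) * s * s^2 <= (s^2 - sm*sp)*s^2).
  { apply Rmult_le_compat_r. nra. exact h4. }
  replace ((2 * s - sm - sp) * s ^ 3) with ((2*s - (sm+sp)) * s * s^2) by ring. lra.
Qed.

Lemma cond3Bb (n b B k : R) : 0 < b -> 0 < B -> b^2 - k*b <= n -> n = 3*B^2 - k*B ->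
  4*Rabs k <= B -> 3*B*b <= 2*n.
Proof.
  intros hb hB h1 h2 h3.
  assert (hk1 : k <= Rabs k) by apply Rle_abs.
  assert (hk2 : -k <= Rabs k) by (rewrite <- Rabs_Ropp; apply Rle_abs).
  set (y := 2*B - 2*k/3).
  destruct (Rle_or_lt b y) as [hy|hy].
  - assert (3*B*b <= 3*B*y) by (apply Rmult_le_compat_l; lra).
    unfold y in *. nra.
  - exfalso.
    assert (hq : 0 < (b-y)*(b+y-k)) by (apply Rmult_lt_0_compat; unfold y in *; lra).
    assert (hyn : y^2 - k*y >= n).
    { unfold y. rewrite h2.
      assert (B*(B - 11/3*Rabs k) >= 0) by (apply Rle_ge, Rmult_le_pos; lra).
      assert (- 11/3*k*B >= -11/3*Rabs k * B) by nra. nra. }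
    nra.
Qed.

Lemma core (E : nat -> R) (G t : R) : 0 <= G -> 0 <= t ->
  (forall k, 0 <= E k <= G * (INR k + 1)) ->
  (forall k, E (S k) <= 2/5*(E k + E (S (S k))) + t) ->
  forall k, E k <= E 0%nat * (/2)^k + 5*t.
Proof.
  intros hG ht hE hrec.
  assert (main : forall j k, E k <= E 0%nat * (/2)^k + 5*t + G*(4/5)^j*(INR k + 1)).
  { induction j as [|j IH]; intros k.
    - simpl. pose proof (hE k). assert (0 <= E 0%nat * (/2)^k).
      { apply Rmult_le_pos. apply (hE 0%nat). apply pow_le. lra. }
      lra.
    - destruct k as [|k].
      + simpl. assert (0 <= G * ((4/5) * (4/5)^j) * (0+1)).
        { apply Rmult_le_pos; [apply Rmult_le_pos|]; try lra. apply Rmult_le_pos. lra. apply pow_le; lra. }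
        lra.
      + eapply Rle_trans. apply hrec.
        pose proof (IH k) as H1. pose proof (IH (S (S k))) as H2.
        rewrite !S_INR in *. simpl pow in *.
        set (h := (/2)^k) in *. set (q := (4/5)^j) in *.
        assert (E0 : 2/5*((E 0%nat * h + 5*t + G*q*(INR k+1)) + (E 0%nat * (/2*(/2*h)) + 5*t + G*q*(INR k+1+1+1))) + t
           = E 0%nat * (/2*h) + 5*t + G*(4/5*q)*(INR k + 1 + 1)) by field.
        lra. }
  intros k.
  assert (hE0 := hE k).
  apply Rnot_lt_le. intros hlt.
  assert (heps : 0 < E k - (E 0%nat * (/2)^k + 5*t)) by lra.
  assert (hc : 0 < G*(INR k+1) + 1) by (pose proof (pos_INR k); nra).
  destruct (pow_lt_1_zero (4/5) ltac:(rewrite Rabs_pos_eq; lra) ((E k - (E 0%nat * (/2)^k + 5*t))/(G*(INR k+1)+1))) as [N HN].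
  { apply Rdiv_lt_0_compat; lra. }
  specialize (HN N (le_n N)). rewrite Rabs_pos_eq in HN by (apply pow_le; lra).
  specialize (main N k).
  assert (G*(4/5)^N*(INR k+1) < E k - (E 0%nat * (/2)^k + 5*t)).
  { apply Rle_lt_trans with ((4/5)^N * (G*(INR k+1)+1)).
    pose proof (pow_le (4/5) N ltac:(lra)).
    replace ((4/5)^N * (G*(INR k+1)+1)) with (G*(4/5)^N*(INR k+1) + (4/5)^N) by ring. lra.
    apply Rmult_lt_reg_r with (/ (G*(INR k+1)+1)). apply Rinv_0_lt_compat; lra.
    rewrite Rmult_assoc, Rinv_r by lra. rewrite Rmult_1_r. exact HN. }
  lra.
Qed.

Definition Bf (k : R) (n : nat) : R := (k + sqrt (k^2 + 12*INR n))/6.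

Lemma sq_nonneg_arg k n : 0 <= k^2 + 12*INR n.
Proof. pose proof (pos_INR n). nra. Qed.

Lemma sqrt_sq x : 0 <= x -> sqrt x ^2 = x.
Proof. intros h. simpl. rewrite Rmult_1_r. apply sqrt_sqrt. exact h. Qed.

Lemma Bf_eq k n : INR n = 3*Bf k n ^2 - k*Bf k n.
Proof.
  unfold Bf. pose proof (sqrt_sq _ (sq_nonneg_arg k n)) as h.
  set (s := sqrt (k^2 + 12*INR n)) in *.
  assert (INR n = (s^2 - k^2)/12) by lra. rewrite H. field.
Qed.

Lemma Bf_pos k n : (1 <= n)%nat -> 0 < Bf k n.
Proof.
  intros hn. unfold Bf. pose proof (sqrt_sq _ (sq_nonneg_arg k n)) as h.
  pose proof (sqrt_pos (k^2 + 12*INR n)).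
  set (s := sqrt (k^2 + 12*INR n)) in *.
  assert (1 <= INR n) by (apply (le_INR 1); exact hn).
  assert (k^2 < s^2) by lra.
  assert (-k < s) by nra. lra.
Qed.

Lemma b_nonneg k b : freud_solution k b -> forall n, 0 <= b n.
Proof.
  intros [h0 [hp _]] n. destruct n. rewrite h0; lra. left; apply hp; lia.
Qed.

Lemma b_rel k b : freud_solution k b -> forall m,
  INR (S m) = b (S m) * (b m + b (S m) + b (S (S m)) - k).
Proof.
  intros hb m. pose proof hb as [h0 [hp hr]].
  specialize (hr (S m) ltac:(lia)). replace (S m - 1)%nat with m in hr by lia.
  assert (0 < b (S m)) by (apply hp; lia).
  rewrite <- hr. field. lra.
Qed.

Lemma b_crude k b : freud_solution k b -> forall m,
  b (S m) ^2 - k * b (S m) <= INR (S m).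
Proof.
  intros hb m. rewrite (b_rel k b hb m).
  pose proof (b_nonneg k b hb m). pose proof (b_nonneg k b hb (S m)).
  pose proof (b_nonneg k b hb (S (S m))). nra.
Qed.

Lemma b_lin k b : freud_solution k b -> forall m,
  b (S m) <= INR (S m) + Rabs k + 1.
Proof.
  intros hb m. pose proof (b_crude k b hb m).
  pose proof (b_nonneg k b hb (S m)). pose proof (pos_INR (S m)).
  pose proof (Rle_abs k). pose proof (Rabs_pos k).
  destruct (Rle_or_lt (b (S m)) 1). lra.
  assert (b (S m) * (b (S m) - k) <= INR (S m)) by nra.
  assert (b (S m) - k <= INR (S m)).
  { destruct (Rle_or_lt (b (S m) - k) 0). lra.
    apply Rle_trans with (b (S m) * (b (S m) - k)); [|lra].
    assert (0 <= (b (S m) - 1)*(b (S m) - k)) by (apply Rmult_le_pos; lra). nra. }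
  lra.
Qed.

Lemma Bf_lin k n : Bf k n <= Rabs k + k^2 + 2*INR n + 1.
Proof.
  unfold Bf. pose proof (sqrt_sq _ (sq_nonneg_arg k n)) as h.
  pose proof (sqrt_pos (k^2 + 12*INR n)). pose proof (pos_INR n).
  set (s := sqrt (k^2 + 12*INR n)) in *.
  pose proof (Rle_abs k). pose proof (Rabs_pos k).
  assert (s <= s^2 + 1) by nra. nra.
Qed.

Lemma sigma_B k m :
  0 <= 2*Bf k (S m) - Bf k m - Bf k (S (S m)) /\
  (2*Bf k (S m) - Bf k m - Bf k (S (S m))) * sqrt (k^2 + 12*INR (S m)) ^3 <= 24.
Proof.
  unfold Bf.
  pose proof (sqrt_sq _ (sq_nonneg_arg k m)) as h1.
  pose proof (sqrt_sq _ (sq_nonneg_arg k (S m))) as h2.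
  pose proof (sqrt_sq _ (sq_nonneg_arg k (S (S m)))) as h3.
  pose proof (sqrt_pos (k^2 + 12*INR m)).
  pose proof (sqrt_pos (k^2 + 12*INR (S m))).
  pose proof (sqrt_pos (k^2 + 12*INR (S (S m)))).
  rewrite !S_INR in *. pose proof (pos_INR m).
  set (sm := sqrt (k^2 + 12*INR m)) in *.
  set (s := sqrt (k^2 + 12*(INR m + 1))) in *.
  set (sp := sqrt (k^2 + 12*(INR m + 1 + 1))) in *.
  assert (0 < s).
  { apply sqrt_lt_R0. nra. }
  destruct (sigma_real s sm sp) as [a1 a2]; try lra.
Qed.

Lemma tail k b (hb : freud_solution k b) (M0 : nat) (t : R) :
  (1 <= M0)%nat -> 0 <= t ->
  (forall n, (S M0 <= n)%nat -> 4*Rabs k <= Bf k n) ->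
  (forall n, (S M0 <= n)%nat -> 24 <= t * sqrt (k^2 + 12*INR n) ^3) ->
  forall j, Rabs (b (M0+j)%nat - Bf k (M0+j)) <= Rabs (b M0 - Bf k M0) * (/2)^j + 5*t.
Proof.
  intros hM ht h4 h24 j.
  pose (E := fun j => Rabs (b (M0+j)%nat - Bf k (M0+j))).
  assert (HE0 : E 0%nat = Rabs (b M0 - Bf k M0)) by (unfold E; rewrite Nat.add_0_r; reflexivity).
  rewrite <- HE0. change (E j <= E 0%nat * (/2)^j + 5*t).
  apply core with (G := 13*INR M0 + 2*Rabs k + k^2 + 15); [| exact ht | |].
  - pose proof (pos_INR M0). pose proof (Rabs_pos k). nra.
  - intros i. unfold E. split. apply Rabs_pos.
    destruct M0 as [|M]. lia.
    replace (S M + i)%nat with (S (M+i)) by lia.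
    pose proof (b_lin k b hb (M+i)). pose proof (Bf_lin k (S (M+i))).
    pose proof (b_nonneg k b hb (S (M+i))). pose proof (Bf_pos k (S (M+i)) ltac:(lia)).
    assert (Rabs (b (S (M+i)) - Bf k (S (M+i))) <= b (S (M+i)) + Bf k (S (M+i))).
    { apply Rabs_le. lra. }
    rewrite !S_INR, plus_INR in *. pose proof (pos_INR M). pose proof (pos_INR i).
    pose proof (Rabs_pos k). nra.
  - intros i. unfold E.
    replace (M0 + S i)%nat with (S (M0+i)) by lia.
    replace (M0 + S (S i))%nat with (S (S (M0+i))) by lia.
    set (m := (M0 + i)%nat).
    destruct (sigma_B k m) as [s1 s2].
    pose proof (sqrt_pos (k^2 + 12*INR (S m))).
    assert (hs : 0 < sqrt (k^2 + 12*INR (S m))) by (apply sqrt_lt_R0; rewrite S_INR; pose proof (pos_INR m); nra).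
    assert (hsig : 2*Bf k (S m) - Bf k m - Bf k (S (S m)) <= t).
    { specialize (h24 (S m) ltac:(unfold m; lia)).
      set (s3 := sqrt (k^2 + 12*INR (S m)) ^3) in *.
      assert (0 < s3) by (unfold s3; apply pow_lt; lra). nra. }
    assert (hbpos : 0 < b (S m)) by (destruct hb as [_ [hp _]]; apply hp; lia).
    apply key_real with (n := INR (S m)) (k := k); try lra.
    + apply Bf_pos; lia.
    + apply b_rel; exact hb.
    + apply Bf_eq.
    + apply cond3Bb with k; try lra.
      apply Bf_pos; lia. apply b_crude; exact hb. apply Bf_eq. apply h4. unfold m; lia.
Qed.

Lemma rp_pos x y : 0 < Rpower x y.
Proof. unfold Rpower. apply exp_pos. Qed.

Lemma rp4 x : 0 < x -> Rpower x (1/4) ^4 = x.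
Proof.
  intros hx. rewrite <- Rpower_pow by apply rp_pos. rewrite Rpower_mult.
  replace (1/4 * INR 4) with 1 by (simpl; field). apply Rpower_1; exact hx.
Qed.

Lemma rp34 x : 0 < x -> Rpower x (3/4) = Rpower x (1/4) ^3.
Proof.
  intros hx. rewrite <- Rpower_pow by apply rp_pos. rewrite Rpower_mult.
  f_equal. simpl. field.
Qed.

Lemma pow4_le x y : 0 <= x -> 0 <= y -> x^4 <= y^4 -> x <= y.
Proof.
  intros hx hy h. apply Rnot_lt_le. intros hlt.
  assert (E : x^4 - y^4 = (x-y)*((x+y)*(x^2+y^2))) by ring.
  assert (0 < (x-y)*((x+y)*(x^2+y^2))).
  { apply Rmult_lt_0_compat. lra. apply Rmult_lt_0_compat. lra. nra. }
  lra.
Qed.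

Lemma sqrt_u4 u : 0 <= u -> sqrt (u^4) = u^2.
Proof. intros h. replace (u^4) with ((u^2)^2) by ring. apply sqrt_pow2. apply pow_le; exact h. Qed.

Lemma part2 k b (hb : freud_solution k b) (cp : R) (N : nat) :
  1 < cp -> (1 <= N)%nat -> upper_pair b cp N ->
  forall n : nat, (N <= n)%nat ->
    alpha b n >= C_alpha cp * Rpower (INR n) (3/4) /\
    beta b n / alpha b n <= theta cp N.
Proof.
  intros hcp hN hup n hn.
  destruct hb as [_ [hpos _]].
  assert (hv4 : Rpower 3 (1/4) ^4 = 3) by (apply rp4; lra).
  pose proof (rp_pos 3 (1/4)) as hv.
  set (v := Rpower 3 (1/4)) in *.
  assert (hs3 : sqrt 3 = v^2) by (rewrite <- hv4; apply sqrt_u4; lra).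
  set (c := sqrt cp).
  assert (hc : 0 < c) by (apply sqrt_lt_R0; lra).
  assert (hc2 : c^2 = cp) by (apply sqrt_sq; lra).
  assert (gen : forall m, (N <= m)%nat ->
     0 < INR m /\ Rpower (INR m) (1/4)^4 = INR m /\
     0 < a_coef b m /\ a_coef b m ^2 = b m /\
     v * a_coef b m <= c * Rpower (INR m) (1/4)).
  { intros m hm.
    assert (hm0 : 0 < INR m) by (apply lt_0_INR; lia).
    assert (hu4 := rp4 (INR m) hm0). pose proof (rp_pos (INR m) (1/4)) as hu.
    set (u := Rpower (INR m) (1/4)) in *.
    assert (hbm : 0 < b m) by (apply hpos; lia).
    assert (ha : 0 < a_coef b m) by (apply sqrt_lt_R0; exact hbm).
    assert (ha2 : a_coef b m ^2 = b m) by (apply sqrt_sq; lra).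
    repeat split; try lra.
    specialize (hup m hm).
    assert (hsm : sqrt (INR m) = u^2) by (rewrite <- hu4 at 1; apply sqrt_u4; lra).
    rewrite hsm, hs3 in hup.
    assert (h2 : (v*a_coef b m)^2 <= (c*u)^2).
    { replace ((v*a_coef b m)^2) with (v^2 * b m) by (rewrite <- ha2; ring).
      replace ((c*u)^2) with (cp*u^2) by (rewrite <- hc2; ring).
      apply Rmult_le_reg_r with (/ v^2). apply Rinv_0_lt_compat; nra.
      replace (v^2 * b m * / v^2) with (b m) by (field; lra).
      replace (cp*u^2 * / v^2) with (cp*u^2/v^2) by (field; lra). lra. }
    assert (0 < v * a_coef b m) by nra. assert (0 < c*u) by nra.
    apply Rnot_lt_le. intros hlt.
    assert ((c*u)^2 < (v*a_coef b m)^2).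
    { simpl. rewrite !Rmult_1_r. apply Rmult_le_0_lt_compat; lra. }
    lra. }
  destruct (gen n hn) as [hn0 [hu0 [ha0 [ha02 hb0]]]].
  destruct (gen (S n) ltac:(lia)) as [hn1 [hu1 [ha1 [ha12 hb1]]]].
  destruct (gen (S (S n)) ltac:(lia)) as [hn2 [hu2 [ha2 [ha22 hb2]]]].
  pose proof (rp_pos (INR n) (1/4)) as hpu0.
  pose proof (rp_pos (INR (S n)) (1/4)) as hpu1.
  pose proof (rp_pos (INR (S (S n))) (1/4)) as hpu2.
  set (u0 := Rpower (INR n) (1/4)) in *.
  set (u1 := Rpower (INR (S n)) (1/4)) in *.
  set (u2 := Rpower (INR (S (S n))) (1/4)) in *.
  set (s0 := a_coef b n) in *. set (s1 := a_coef b (S n)) in *. set (s2 := a_coef b (S (S n))) in *.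
  split.
  - unfold alpha, C_alpha. fold v c s0. rewrite rp34 by lra. fold u0.
    rewrite <- hu0.
    apply Rle_ge.
    assert (E : u0^4/s0 - v/c*u0^3 = u0^3*(u0*c - v*s0)/(c*s0)) by (field; lra).
    assert (0 <= u0^3*(u0*c - v*s0)/(c*s0)).
    { apply Rmult_le_pos. apply Rmult_le_pos. apply pow_le; lra. lra.
      left; apply Rinv_0_lt_compat; nra. }
    lra.
  - unfold beta, alpha, theta. fold s0 s1 s2.
    assert (hP : 0 < (1 + 1/INR N)*(1 + 2/INR N)).
    { assert (0 < INR N) by (apply lt_0_INR; lia).
      apply Rmult_lt_0_compat; apply Rplus_lt_0_compat; try lra; apply Rdiv_lt_0_compat; lra. }
    pose proof (rp4 _ hP) as hq4. pose proof (rp_pos ((1 + 1/INR N)*(1 + 2/INR N)) (1/4)) as hq.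
    set (q := Rpower ((1 + 1/INR N)*(1 + 2/INR N)) (1/4)) in *.
    set (w := u1*u2/u0^2).
    assert (hw : 0 < w) by (unfold w; apply Rdiv_lt_0_compat; nra).
    assert (hwq : w <= q).
    { apply pow4_le; try lra.
      assert (E : w^4 = (1 + 1/INR n)*(1+2/INR n)).
      { unfold w. replace ((u1*u2/u0^2)^4) with (u1^4*u2^4/(u0^4*u0^4)) by (field; lra).
        rewrite hu0, hu1, hu2. rewrite !S_INR. field. lra. }
      rewrite E, hq4.
      assert (hNn : INR N <= INR n) by (apply le_INR; exact hn).
      assert (0 < INR N) by (apply lt_0_INR; lia).
      assert (1/INR n <= 1/INR N) by (apply Rmult_le_compat_l; [lra| apply Rinv_le_contravar; lra]).
      assert (2/INR n <= 2/INR N) by (apply Rmult_le_compat_l; [lra| apply Rinv_le_contravar; lra]).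
      assert (0 < 1/INR n) by (apply Rdiv_lt_0_compat; lra).
      assert (0 < 2/INR n) by (apply Rdiv_lt_0_compat; lra).
      nra. }
    assert (E1 : s0*s1*s2/(INR n/s0) = s0^2*s1*s2/u0^4) by (rewrite hu0; field; lra).
    rewrite E1.
    assert (hs0 : v*s0 <= c*u0) by exact hb0.
    assert (b1 : s0^2 * v^2 <= c^2*u0^2).
    { assert (0 <= v*s0) by nra. nra. }
    assert (b2 : s1*s2*v^2 <= c^2*(u1*u2)).
    { assert (0 <= v*s1) by nra. assert (0 <= v*s2) by nra.
      replace (s1*s2*v^2) with ((v*s1)*(v*s2)) by ring.
      replace (c^2*(u1*u2)) with ((c*u1)*(c*u2)) by ring.
      apply Rmult_le_compat; lra. }
    assert (b3 : s0^2*s1*s2*v^4 <= c^4*u0^2*(u1*u2)).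
    { replace (s0^2*s1*s2*v^4) with ((s0^2*v^2)*(s1*s2*v^2)) by ring.
      replace (c^4*u0^2*(u1*u2)) with ((c^2*u0^2)*(c^2*(u1*u2))) by ring.
      apply Rmult_le_compat; [apply Rmult_le_pos; apply pow_le; lra | 
        apply Rmult_le_pos; [apply Rmult_le_pos; lra | apply pow_le; lra] | exact b1 | exact b2]. }
    rewrite hv4 in b3.
    assert (E2 : c^4*u0^2*(u1*u2) = cp^2 * w * u0^4) by (unfold w; rewrite <- hc2; field; lra).
    rewrite E2 in b3.
    assert (s0^2*s1*s2/u0^4 <= cp^2*w/3).
    { apply Rmult_le_reg_r with (3*u0^4). nra.
      replace (s0^2*s1*s2/u0^4 * (3*u0^4)) with (s0^2*s1*s2*3) by (field; lra).
      replace (cp^2*w/3*(3*u0^4)) with (cp^2*w*u0^4) by field. lra. }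
    assert (cp^2*w/3 <= cp^2/3*q) by nra. lra.
Qed.

Lemma half_pow j : 0 <= (/2)^j <= 1.
Proof.
  induction j; simpl. lra. split. apply Rmult_le_pos; lra. lra.
Qed.

Lemma sqrt_ge_of_sq x a : 0 <= a -> a^2 <= x -> a <= sqrt x.
Proof.
  intros ha h. rewrite <- (sqrt_pow2 a ha). apply sqrt_le_1_alt. exact h.
Qed.

Lemma part3_upper b (hb : freud_solution 4 b) : upper_pair b (1025/1000) 2187.
Proof.
  assert (H2100 : INR 2100 = 2100) by (rewrite INR_IZR_INZ; reflexivity).
  assert (h1 : forall n, (S 2099 <= n)%nat -> 2100 <= INR n).
  { intros n hn. rewrite <- H2100. apply le_INR. exact hn. }
  pose proof (tail 4 b hb 2099 (1/100000) ltac:(lia) ltac:(lra)) as T.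
  assert (HT : forall j, Rabs (b (2099+j)%nat - Bf 4 (2099+j)) <= Rabs (b 2099%nat - Bf 4 2099) * (/2)^j + 5*(1/100000)).
  { apply T.
    - intros n hn. specialize (h1 n hn). unfold Bf.
      pose proof (sqrt_ge_of_sq (4^2 + 12*INR n) 92 ltac:(lra) ltac:(lra)).
      rewrite Rabs_pos_eq by lra. lra.
    - intros n hn. specialize (h1 n hn).
      pose proof (sqrt_ge_of_sq (4^2 + 12*INR n) 150 ltac:(lra) ltac:(lra)).
      set (s := sqrt (4^2 + 12*INR n)) in *.
      assert (150^3 <= s^3) by (apply pow_incr; lra). lra. }
  assert (hd : Rabs (b 2099%nat - Bf 4 2099) <= 7000).
  { replace 2099%nat with (S 2098) by reflexivity.
    pose proof (b_lin 4 b hb 2098). pose proof (Bf_lin 4 (S 2098)).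
    pose proof (b_nonneg 4 b hb (S 2098)). pose proof (Bf_pos 4 (S 2098) ltac:(lia)).
    replace (INR (S 2098)) with 2099 in * by (rewrite INR_IZR_INZ; reflexivity).
    rewrite Rabs_pos_eq in * by lra.
    apply Rabs_le. lra. }
  intros n hn.
  specialize (HT (n - 2099)%nat). replace (2099 + (n - 2099))%nat with n in HT by lia.
  assert (hp : (/2)^(n-2099) <= (/2)^88).
  { replace (n - 2099)%nat with (88 + (n - 2187))%nat by lia.
    rewrite pow_add. destruct (half_pow (n-2187)). pose proof (half_pow 88).
    assert (0 <= (/2)^88) by lra. nra. }
  assert (hsmall : Rabs (b 2099%nat - Bf 4 2099) * (/2)^(n-2099) <= 7000 * (/2)^88).
  { apply Rmult_le_compat; try lra. apply Rabs_pos. apply half_pow. }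
  assert (h88 : 7000 * (/2)^88 <= 1/100000).
  { rewrite pow_inv. assert (2^88 >= 10^26) by (unfold pow; lra).
    assert (/2^88 <= /10^26) by (apply Rinv_le_contravar; unfold pow in *; lra).
    unfold pow in *. lra. }
  assert (hbn : b n <= Bf 4 n + 6/100000).
  { assert (b n - Bf 4 n <= Rabs (b n - Bf 4 n)) by apply Rle_abs. lra. }
  assert (H2187 : INR 2187 = 2187) by (rewrite INR_IZR_INZ; reflexivity).
  assert (hn' : 2187 <= INR n) by (rewrite <- H2187; apply le_INR; exact hn).
  pose proof (sqrt_lt_R0 3 ltac:(lra)) as h3.
  assert (h33 : sqrt 3 ^2 = 3) by (apply sqrt_sq; lra).
  assert (hnn : sqrt (INR n) ^2 = INR n) by (apply sqrt_sq; lra).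
  pose proof (sqrt_pos (INR n)).
  set (z := sqrt (INR n) / sqrt 3).
  assert (hz2 : z^2 = INR n / 3) by (unfold z; replace ((sqrt (INR n) / sqrt 3)^2) with (sqrt (INR n)^2 / sqrt 3^2) by (field; lra); rewrite hnn, h33; reflexivity).
  assert (hz0 : 0 <= z) by (unfold z; apply Rmult_le_pos; [lra | left; apply Rinv_0_lt_compat; lra]).
  assert (hz : 27 <= z) by nra.
  replace (1025/1000 * sqrt (INR n) / sqrt 3) with (1025/1000 * z) by (unfold z; field; lra).
  unfold Bf in hbn.
  pose proof (sqrt_sq (4^2+12*INR n) ltac:(lra)) as hS.
  pose proof (sqrt_pos (4^2+12*INR n)).
  set (S := sqrt (4^2+12*INR n)) in *.
  set (R := 615/100*z - 400036/100000).
  assert (hR : 0 <= R) by (unfold R; lra).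
  assert (hSR2 : S^2 <= R^2).
  { rewrite hS. unfold R. assert (hz3 : INR n = 3*z^2) by lra. rewrite hz3.
    assert (0 <= (z-27)*(18225/10000*(z+27) - 2*615/100*400036/100000)) by (apply Rmult_le_pos; lra).
    nra. }
  assert (S <= R).
  { apply Rnot_lt_le. intros hlt. assert (R^2 < S^2).
    { simpl. rewrite !Rmult_1_r. apply Rmult_le_0_lt_compat; lra. } lra. }
  unfold R in *. lra.
Qed.

Lemma quart_bracket w T lo hi : 0 <= lo -> 0 <= hi -> 0 < w -> w^4 = T -> lo^4 < T -> T < hi^4 -> lo < w < hi.
Proof.
  intros hlo hhi hw e h1 h2. split.
  - apply Rnot_le_lt. intros h. assert (w^4 <= lo^4) by (apply pow_incr; lra). lra.
  - apply Rnot_le_lt. intros h. assert (hi^4 <= w^4) by (apply pow_incr; lra). lra.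
Qed.

Lemma num_C : Rabs (C_alpha (1025/1000) - 1299925254 / 10^9) < 1 / 10^9.
Proof.
  unfold C_alpha.
  pose proof (rp4 3 ltac:(lra)) as hv4. pose proof (rp_pos 3 (1/4)) as hv.
  assert (hc : 0 < sqrt (1025/1000)) by (apply sqrt_lt_R0; lra).
  assert (hc2 : sqrt (1025/1000)^2 = 1025/1000) by (apply sqrt_sq; lra).
  set (v := Rpower 3 (1/4)) in *. set (c := sqrt (1025/1000)) in *.
  assert (hw4 : (v/c)^4 = 3/(1025/1000)^2).
  { replace ((v/c)^4) with (v^4/(c^2)^2) by (field; lra). rewrite hv4, hc2. reflexivity. }
  destruct (quart_bracket (v/c) _ (1299925253/10^9) (1299925255/10^9) ltac:(lra) ltac:(lra)
    ltac:(apply Rdiv_lt_0_compat; lra) hw4 ltac:(unfold pow; lra) ltac:(unfold pow; lra)).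
  apply Rabs_def1; unfold pow in *; lra.
Qed.

Lemma num_T : Rabs (theta (1025/1000) 2187 - 350328462 / 10^9) < 1 / 10^7.
Proof.
  unfold theta.
  assert (H2187 : INR 2187 = 2187) by (rewrite INR_IZR_INZ; reflexivity).
  rewrite H2187.
  assert (hP : 0 < (1 + 1/2187)*(1+2/2187)) by lra.
  pose proof (rp4 _ hP) as hq4. pose proof (rp_pos ((1 + 1/2187)*(1+2/2187)) (1/4)) as hq.
  set (q := Rpower ((1 + 1/2187)*(1+2/2187)) (1/4)) in *.
  set (c := (1025/1000)^2/3).
  destruct (quart_bracket q _ ((350328462/10^9 - 1/10^7)/c) ((350328462/10^9 + 1/10^7)/c)
    ltac:(unfold c, pow; lra) ltac:(unfold c, pow; lra) hq hq4 ltac:(unfold c, pow; lra) ltac:(unfold c, pow; lra)).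
  assert (hc : c = 1050625/3000000) by (unfold c, pow; lra).
  rewrite hc in *.
  apply Rabs_def1; unfold pow in *; lra.
Qed.

Lemma Bf_upper k n : Bf k n <= Rabs k / 3 + sqrt (INR n) / sqrt 3.
Proof.
  unfold Bf.
  pose proof (sqrt_sq _ (sq_nonneg_arg k n)) as hs.
  pose proof (sqrt_pos (k^2 + 12*INR n)).
  pose proof (pos_INR n).
  assert (h33 : sqrt 3 ^2 = 3) by (apply sqrt_sq; lra).
  assert (hnn : sqrt (INR n) ^2 = INR n) by (apply sqrt_sq; lra).
  pose proof (sqrt_lt_R0 3 ltac:(lra)). pose proof (sqrt_pos (INR n)).
  pose proof (Rle_abs k). pose proof (Rabs_pos k).
  assert (hk2 : Rabs k ^2 = k^2).
  { pose proof (Rsqr_abs k). unfold Rsqr in H5. simpl. lra. }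
  set (s := sqrt (k^2 + 12*INR n)) in *.
  set (r3 := sqrt 3) in *. set (rn := sqrt (INR n)) in *.
  set (R := Rabs k + 2*r3*rn).
  assert (hR : 0 <= R) by (unfold R; nra).
  assert (hsR : s <= R).
  { apply Rnot_lt_le. intros hlt.
    assert (R^2 < s^2) by (simpl; rewrite !Rmult_1_r; apply Rmult_le_0_lt_compat; lra).
    assert (R^2 = k^2 + 4*Rabs k*r3*rn + 12*INR n).
    { unfold R. replace ((Rabs k + 2 * r3 * rn) ^ 2) with (Rabs k ^2 + 4*Rabs k*r3*rn + 4*(r3^2)*(rn^2)) by ring.
      rewrite hk2, h33, hnn. ring. }
    assert (0 <= Rabs k*r3*rn) by (apply Rmult_le_pos; [apply Rmult_le_pos|]; lra).
    lra. }
  assert (E : r3*rn/3 = rn/r3).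
  { field_simplify_eq; [|lra]. replace (r3*r3) with (r3^2) by ring. rewrite h33. ring. }
  unfold R in hsR. lra.
Qed.

Lemma part1 k b (hb : freud_solution k b) (cp : R) : 1 < cp ->
  exists N : nat, (1 <= N)%nat /\ upper_pair b cp N.
Proof.
  intros hcp.
  destruct (INR_unbounded (53*k^2)) as [N2 hN2].
  set (M0 := S N2).
  assert (hM0 : 53*k^2 <= INR M0) by (unfold M0; rewrite S_INR; lra).
  assert (h1 : forall n, (S M0 <= n)%nat -> 53*k^2 + 1 <= INR n).
  { intros n hn. apply le_INR in hn. rewrite S_INR in hn. lra. }
  pose proof (tail k b hb M0 1 ltac:(unfold M0; lia) ltac:(lra)) as T.
  assert (HT : forall j, Rabs (b (M0+j)%nat - Bf k (M0+j)) <= Rabs (b M0 - Bf k M0) * (/2)^j + 5*1).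
  { apply T.
    - intros n hn. specialize (h1 n hn). unfold Bf.
      pose proof (Rle_abs k). pose proof (Rabs_pos k).
      assert (hk2 : Rabs k ^2 = k^2).
      { pose proof (Rsqr_abs k). unfold Rsqr in H1. simpl. lra. }
      pose proof (sqrt_ge_of_sq (k^2 + 12*INR n) (25*Rabs k) ltac:(lra) ltac:(nra)).
      assert (-k <= Rabs k) by (rewrite <- Rabs_Ropp; apply Rle_abs).
      lra.
    - intros n hn. specialize (h1 n hn).
      pose proof (sqrt_ge_of_sq (k^2 + 12*INR n) 3 ltac:(lra) ltac:(nra)).
      set (s := sqrt (k^2 + 12*INR n)) in *.
      assert (3^3 <= s^3) by (apply pow_incr; lra). simpl in *. lra. }
  set (K := Rabs (b M0 - Bf k M0) + 5).
  set (X := 2*(Rabs k/3 + K)/(cp-1)).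
  destruct (INR_unbounded (X^2)) as [N1 hN1].
  exists (S M0 + N1)%nat. split. lia.
  intros n hn.
  specialize (HT (n - M0)%nat). replace (M0 + (n - M0))%nat with n in HT by lia.
  destruct (half_pow (n - M0)).
  assert (hbn : b n <= Bf k n + K).
  { assert (b n - Bf k n <= Rabs (b n - Bf k n)) by apply Rle_abs.
    assert (Rabs (b M0 - Bf k M0) * (/2)^(n-M0) <= Rabs (b M0 - Bf k M0)).
    { pose proof (Rabs_pos (b M0 - Bf k M0)). nra. }
    unfold K. lra. }
  pose proof (Bf_upper k n).
  assert (hnX : X^2 <= INR n).
  { apply le_INR in hn. rewrite plus_INR in hn. pose proof (pos_INR (S M0)). lra. }
  assert (hK0 : 0 <= K) by (unfold K; pose proof (Rabs_pos (b M0 - Bf k M0)); lra).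
  assert (hX0 : 0 <= X) by (unfold X; apply Rmult_le_pos; [pose proof (Rabs_pos k); lra | left; apply Rinv_0_lt_compat; lra]).
  pose proof (sqrt_ge_of_sq (INR n) X hX0 hnX) as hsX.
  pose proof (sqrt_lt_R0 3 ltac:(lra)) as h3.
  assert (h33 : sqrt 3 ^2 = 3) by (apply sqrt_sq; lra).
  assert (h32 : sqrt 3 <= 2).
  { apply Rnot_lt_le. intros hlt. assert (2^2 < sqrt 3 ^2) by (simpl; rewrite !Rmult_1_r; apply Rmult_le_0_lt_compat; lra). lra. }
  set (rn := sqrt (INR n)) in *.
  assert (hXe : X * (cp-1) = 2*(Rabs k/3 + K)) by (unfold X; field; lra).
  assert (rn*(cp-1) >= 2*(Rabs k/3 + K)) by nra.
  assert (E : cp * rn / sqrt 3 = rn/sqrt 3 + (cp-1)*rn/sqrt 3) by (field; lra).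
  rewrite E.
  assert ((cp-1)*rn/sqrt 3 >= Rabs k/3 + K).
  { apply Rle_ge. apply Rmult_le_reg_r with (sqrt 3). lra.
    replace ((cp-1)*rn/sqrt 3 * sqrt 3) with ((cp-1)*rn) by (field; lra).
    pose proof (Rabs_pos k). nra. }
  lra.
Qed.

Theorem mainTheorem11 (kappa : R) (b : nat -> R) (hb : freud_solution kappa b) :
  (forall cp : R, 1 < cp -> exists N : nat, (1 <= N)%nat /\ upper_pair b cp N)
  /\
  (forall (cp : R) (N : nat), 1 < cp -> (1 <= N)%nat -> upper_pair b cp N ->
     forall n : nat, (N <= n)%nat ->
       alpha b n >= C_alpha cp * Rpower (INR n) (3/4) /\
       beta b n / alpha b n <= theta cp N)
  /\
  (kappa = 4 ->
     upper_pair b (1025/1000) 2187 /\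
     Rabs (C_alpha (1025/1000) - 1299925254 / 10^9) < 1 / 10^9 /\
     Rabs (theta (1025/1000) 2187 - 350328462 / 10^9) < 1 / 10^7).
Proof.
  split; [|split].
  - intros cp hcp. apply (part1 kappa b hb cp hcp).
  - intros cp N hcp hN hup. apply (part2 kappa b hb cp N hcp hN hup).
  - intros hk. subst kappa. split; [|split].
    + apply part3_upper; exact hb.
    + apply num_C.
    + apply num_T.
Qed.
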